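(* Let $q\ge2$ and $\ell\ge3$ be integers, $n$ a positive integer, $P=\lceil \frac{\log_q n+\log_q\log_q n}{2}\rceil$, and $a\in[0,P-1]$. Then the code $$\mathcal{C}=\{\boldsymbol{x}\in\Sigma_q^n:\ \boldsymbol{x}\text{ is good},\ \mathrm{Inv}(\boldsymbol{x})\equiv a\pmod P\}$$ is an $\ell$-read $(n,3)_q$-code. Moreover, there exists $a\in[0,P-1]$ such that $r(\mathcal{C})\le \log_q P+o(1)=\log_q\log_q n-\log_q 2+o(1)$ as $n\to\infty$.
   Context: $\Sigma_q=\{0,\dots,q-1\}$, $[i,j]=\{i,\dots,j\}$. For $\boldsymbol{x}\in\Sigma_q^n$, $x[i]$ is its $i$-th entry, with $x[i]=0$ for $i\notin[1,n]$, and $\boldsymbol{x}[i,j]=(x[i],\dots,x[j])$. The $\ell$-read vector of $\boldsymbol{x}$ is the length-$(n+\ell-1)$ vector $\mathcal{R}_\ell(\boldsymbol{x})$ whose $i$-th entry is the multiset $\{\{x[i-\ell+1],\dots,x[i]\}\}$. A set $\mathcal{C}\subseteq\Sigma_q^n$ is an $\ell$-read $(n,d)_q$-code if $d_H(\mathcal{R}_\ell(\boldsymbol{x}),\mathcal{R}_\ell(\boldsymbol{y}))\ge d$ for all distinct $\boldsymbol{x},\boldsymbol{y}\in\mathcal{C}$ ($d_H$ = Hamming distance). Redundancy: $r(\mathcal{C})=n-\log_q|\mathcal{C}|$. $\mathrm{Inv}(\boldsymbol{x})=|\{(i,j):1\le i<j\le n,\ x[i]>x[j]\}|$. A sequence is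 alternating if it is of the form $abab\cdots$ (of any length) for two distinct symbols $a,b$. For $\ell\ge3$, $\boldsymbol{x}\in\Sigma_q^n$ is good if for every integer $t\ge\frac{\log_q n+\log_q\log_q n}{2}-1$ and every $i\in[1,n-t\ell-1]$, the sequence $(x[i],x[i+1],x[i+\ell],x[i+\ell+1],\dots,x[i+t\ell],x[i+t\ell+1])$ of length $2(t+1)$ is not alternating. *)

(* Defs.v *)
From Stdlib Require Import Reals ClassicalEpsilon.
From mathcomp Require Import all_boot.
Delimit Scope R_scope with Re.
Set Implicit Arguments. Unset Strict Implicit. Unset Printing Implicit Defensive.

Definition word (q n : nat) := (n.-tuple 'I_q)%type.

(* x[i], 1-based; x[i] = 0 for i outside [1,n]. *)
Definition xat (q n : nat) (x : word q n) (i : nat) : nat :=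
  if (0 < i <= n)%N then nth 0%N (map val (val x)) i.-1 else 0%N.

(* i-th entry of the l-read vector, as a list (multiset = list up to perm_eq):
   {{ x[i-l+1], ..., x[i] }}.  Indices <= 0 give 0 (truncated subtraction
   yields index 0, where xat is 0). *)
Definition read_entry (q n : nat) (l : nat) (x : word q n) (i : nat) : seq nat :=
  [seq xat x (i - k) | k <- iota 0 l].

Definition read_dist (q n l : nat) (x y : word q n) : nat :=
  count (fun i => ~~ perm_eq (read_entry l x i) (read_entry l y i)) (iota 1 (n + l - 1)).

Definition is_read_code (q n l d : nat) (C : {set word q n}) : Prop :=
  forall x y, x \in C -> y \in C -> x != y -> (d <= read_dist l x y)%N.

Definition Inv (q n : nat) (x : word q n) : nat :=
  \sum_(1 <= i < n.+1) \sum_(i.+1 <= j < n.+1) (xat x j < xat x i)%N.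

Definition alternating (s : seq nat) : Prop :=
  exists a b : nat, a <> b /\ s = [seq (if odd k then b else a) | k <- iota 0 (size s)].

Definition logq (q : nat) (x : R) : R := (ln x / ln (INR q))%Re.

Definition half_loglog (q n : nat) : R :=
  ((logq q (INR n) + logq q (logq q (INR n))) / 2)%Re.

Definition ceilR (x : R) : Z := (1 - up (- x))%Z.

(* P = ceil((log_q n + log_q log_q n)/2), as a nat (0 if nonpositive) *)
Definition Pval (q n : nat) : nat := Z.to_nat (ceilR (half_loglog q n)).

Definition the_subseq (q n l : nat) (x : word q n) (i t : nat) : seq nat :=
  flatten [seq [:: xat x (i + s * l); xat x (i + s * l + 1)] | s <- iota 0 t.+1].

Definition good (q n l : nat) (x : word q n) : Prop :=
  forall t : nat, (INR t >= half_loglog q n - 1)%Re ->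
  forall i : nat, (1 <= i)%N -> (i + t * l + 1 <= n)%N ->
  ~ alternating (the_subseq l x i t).

Definition pbool (P : Prop) : bool :=
  if excluded_middle_informative P then true else false.

Definition codeC (q n l a : nat) : {set word q n} :=
  [set x : word q n | pbool (good l x) && (Inv x == a %[mod Pval q n])].

Definition redundancy (q n : nat) (C : {set word q n}) : R :=
  (INR n - logq q (INR #|C|))%Re.

(* Main.v *)
Require Import Defs.
From Stdlib Require Import Reals Lra ZArith Classical ClassicalEpsilon.
From mathcomp Require Import all_boot.
From mathcomp Require Import zify.
Set Implicit Arguments. Unset Strict Implicit.


Definition Wc (l : nat) (X : nat -> nat) (c i : nat) : nat :=
  count (fun k => X (i - k) == c) (iota 0 l).

Lemma W_rec l X c i : 0 < l ->
  Wc l X c i.+1 + (X (i.+1 - l) == c) = Wc l X c i + (X i.+1 == c).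
Proof.
case: l => // l _; rewrite /Wc.
have E1 : iota 0 l.+1 = 0 :: map (addn 1) (iota 0 l) by rewrite /= -iotaDl.
have E2 : iota 0 l.+1 = iota 0 l ++ [:: l] by rewrite -addn1 iotaD.
rewrite {1}E1 E2 /= count_map count_cat /= subn0 subSS addn0.
have -> : count (preim (addn 1) (fun k : nat => X (i.+1 - k) == c)) (iota 0 l)
   = count (fun k => X (i - k) == c) (iota 0 l).
  by apply: eq_count => k /=; rewrite add1n subSS.
lia.
Qed.

Definition Pat (X Y : nat -> nat) (j u c k : nat) : Prop :=
  match u with
  | 0 => (X k == c) + (Y j == c) = (Y k == c) + (X j == c)
  | 1 => (X k == c) + (X j == c) = (Y k == c) + (Y j == c)
  | _ => (X k == c) = (Y k == c) :> nat
  end.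


Lemma struct_pat (l : nat) (X Y : nat -> nat) (j j' : nat) :
  2 < l -> X 0 = Y 0 -> X j != Y j -> (forall k, k < j -> X k = Y k) ->
  X j' != Y j' -> (forall k, j' < k -> X k = Y k) ->
  (forall m, m != j -> m != j' + l - 1 -> forall c, Wc l X c m = Wc l Y c m) ->
  forall s u c, u < l -> j + s * l + u <= j' + l - 2 -> Pat X Y j u c (j + s * l + u).
Proof.
move=> hl h0 hj hmin hj' hmax hS.
have jpos : 0 < j by case: j hj hmin {hS} => //; rewrite h0 eqxx.
have jj' : j <= j'.
  rewrite leqNgt; apply/negP => /hmax h; by rewrite h eqxx in hj.
have stepA : forall k, j + 2 <= k -> k <= j' + l - 2 -> forall c,
    (X k == c) + (Y (k - l) == c) = (Y k == c) + (X (k - l) == c) :> nat.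
  move=> [|i] hk1 hk2 c; first lia.
  have := W_rec X c i (ltnW (ltnW hl)); have := W_rec Y c i (ltnW (ltnW hl)).
  have := hS i.+1 ltac:(apply/eqP; lia) ltac:(apply/eqP; lia) c.
  have := hS i ltac:(apply/eqP; lia) ltac:(apply/eqP; lia) c.
  lia.
have stepB : forall c, (X j.+1 == c) + (X j == c) = (Y j.+1 == c) + (Y j == c) :> nat.
  move=> c.
  case: j jpos {hj stepA} jj' hmin hS => // i _ jj' hmin hS.
  have := W_rec X c i (ltnW (ltnW hl)); have := W_rec Y c i (ltnW (ltnW hl)).
  have := W_rec X c i.+1 (ltnW (ltnW hl)); have := W_rec Y c i.+1 (ltnW (ltnW hl)).
  have := hS i ltac:(apply/eqP; lia) ltac:(apply/eqP; lia) c.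
  have := hS i.+2 ltac:(apply/eqP; lia) ltac:(apply/eqP; lia) c.
  rewrite (hmin (i.+1 - l)); last lia.
  rewrite (hmin (i.+2 - l)); last lia.
  lia.
elim=> [|s IH] u c hu hk.
- case: u hu hk => [|[|u]] hu hk /=; rewrite ?mul0n ?addn0 ?addn1; try lia.
  + exact: stepB.
  + have := stepA (j + u.+2) ltac:(lia) ltac:(lia) c.
    rewrite (hmin (j + u.+2 - l)); last lia.
    lia.
- have := stepA (j + s.+1 * l + u) ltac:(lia) hk c.
  have -> : j + s.+1 * l + u - l = j + s * l + u by rewrite mulSn; lia.
  have := IH u c hu ltac:(lia).
  case: u {hu hk IH} => [|[|u]] /=; lia.
Qed.


Lemma b2n1 (b : bool) : (b : nat) = 1 -> b. Proof. by case: b. Qed.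
Lemma b2n0 (b : bool) : (b : nat) = 0 -> ~~ b. Proof. by case: b. Qed.

Lemma struct_form (l : nat) (X Y : nat -> nat) (j j' : nat) :
  2 < l -> X 0 = Y 0 -> X j != Y j -> (forall k, k < j -> X k = Y k) ->
  X j' != Y j' -> (forall k, j' < k -> X k = Y k) ->
  (forall m, m != j -> m != j' + l - 1 -> forall c, Wc l X c m = Wc l Y c m) ->
  exists t, j' = j + t * l + 1 /\
   (forall s, s <= t -> [/\ X (j + s * l) = X j, Y (j + s * l) = Y j,
        X (j + s * l + 1) = Y j & Y (j + s * l + 1) = X j]) /\
   (forall s u, s <= t -> 1 < u < l -> X (j + s * l + u) = Y (j + s * l + u)).
Proof.
move=> hl h0 hj hmin hj' hmax hS.
have P := struct_pat hl h0 hj hmin hj' hmax hS.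
have jj' : j <= j'.
  rewrite leqNgt; apply/negP => /hmax h; by rewrite h eqxx in hj.
have hd := divn_eq (j' - j) l.
have hr : (j' - j) %% l < l by rewrite ltn_pmod //; lia.
set t := (j' - j) %/ l in hd *; set r := (j' - j) %% l in hd hr.
have ej' : j' = j + t * l + r by lia.
have hYX : (Y j == X j) = false by apply/negbTE; rewrite eq_sym.
have hYX' : (Y j' == X j') = false by apply/negbTE; rewrite eq_sym.
have r1 : r = 1.
  case: r hr hd ej' => [|[|r]] hr hd ej' //.
  - have := P t 0 (X j) hr ltac:(lia); rewrite /= -ej' eqxx hYX => h1.
    have := P t 1 (X j) ltac:(lia) ltac:(lia); rewrite /= eqxx hYX.
    rewrite (hmax (j + t * l + 1)); last lia.
    lia.
  - have := P t r.+2 (X j') hr ltac:(lia); rewrite /= -ej' eqxx hYX'.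
    lia.
exists t; split; first lia.
have hst : forall s, s <= t -> s * l <= t * l by move=> s hs; apply: leq_mul.
split.
- move=> s hs; have := hst s hs => hsl.
  have B0 : j + s * l + 0 <= j' + l - 2 by lia.
  have B1 : j + s * l + 1 <= j' + l - 2 by lia.
  have L0 : 0 < l by lia.
  have L1 : 1 < l by lia.
  have := P s 0 (X j) L0 B0; rewrite /= addn0 eqxx hYX => e1.
  have := P s 0 (Y j) L0 B0; rewrite /= addn0 eqxx (eq_sym (X j)) hYX => e2.
  have := P s 1 (X j) L1 B1; rewrite /= eqxx hYX => e3.
  have := P s 1 (Y j) L1 B1; rewrite /= eqxx (eq_sym (X j)) hYX => e4.
  split; apply/eqP.
  + apply: b2n1; clear -e1; lia.
  + apply: b2n1; clear -e2; lia.
  + apply: b2n1; clear -e4; lia.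
  + apply: b2n1; clear -e3; lia.
- move=> s u hs /andP [hu1 hu2]; have := hst s hs => hsl.
  have := P s u (X (j + s * l + u)) hu2 ltac:(lia).
  case: u hu1 hu2 => [|[|u]] // _ hu2 /=; rewrite eqxx => h.
  apply/eqP; rewrite eq_sym; apply: b2n1; clear -h; lia.
Qed.

Definition InvF (n : nat) (f : nat -> nat) : nat :=
  \sum_(1 <= i < n.+1) \sum_(i.+1 <= j < n.+1) (f j < f i).

Definition tau (k i : nat) : nat := if i == k then k.+1 else if i == k.+1 then k else i.

Lemma tauK k i : tau k (tau k i) = i.
Proof.
rewrite /tau; case: (i =P k) => [->|h1]; first by rewrite eqxx (_ : (k.+1 == k) = false) //; lia.
case: (i =P k.+1) => [->|h2]; first by rewrite eqxx.
by rewrite (_ : (i == k) = false); [rewrite (_ : (i == k.+1) = false) //; apply/eqP|apply/eqP].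
Qed.

Lemma sum_swap (H : nat -> nat) n k : 1 <= k -> k < n ->
  \sum_(1 <= i < n.+1) H (tau k i) = \sum_(1 <= i < n.+1) H i.
Proof.
move=> hk hkn.
rewrite (@big_cat_nat _ _ _ k) //; last lia.
rewrite [in RHS](@big_cat_nat _ _ _ k) //; last lia.
rewrite (@big_cat_nat _ _ _ k.+2 k) //; last lia.
rewrite [in RHS](@big_cat_nat _ _ _ k.+2 k) //; last lia.
congr (_ + (_ + _)).
- apply: eq_big_nat => i /andP [_ hi]; rewrite /tau.
  rewrite (_ : (i == k) = false); last lia. rewrite (_ : (i == k.+1) = false) //; lia.
- rewrite big_ltn // big_ltn // big_geq // big_ltn // big_ltn // big_geq //.
  rewrite /tau eqxx (_ : (k.+1 == k) = false) ?eqxx; last lia.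
  by rewrite /= !addn0 addnC.
- apply: eq_big_nat => i /andP [hi _]; rewrite /tau.
  rewrite (_ : (i == k) = false); last lia. rewrite (_ : (i == k.+1) = false) //; lia.
Qed.

Lemma InvF_full n f : InvF n f =
  \sum_(1 <= i < n.+1) \sum_(1 <= j < n.+1) (i < j) * (f j < f i).
Proof.
rewrite /InvF; apply: eq_big_nat => i /andP [h1 h2].
rewrite [in RHS](@big_cat_nat _ _ _ i.+1) //; try lia.
rewrite [X in _ = X + _]big1_seq ?add0n; last first.
  move=> j /andP [_]; rewrite mem_iota => /andP [_ hj]; rewrite (_ : (i < j) = false) //; lia.
by apply: eq_big_nat => j /andP [hj _]; rewrite hj mul1n.
Qed.

Lemma sum_delta n a c : 1 <= a <= n ->
  \sum_(1 <= j < n.+1) (j == a) * c = c.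
Proof.
move=> /andP [h1 h2].
have E1 : \sum_(1 <= j < a) (j == a) * c = 0.
  rewrite big1_seq // => j /andP [_]; rewrite mem_iota => /andP [_ hj].
  rewrite (_ : (j == a) = false) //; lia.
have E2 : \sum_(a.+1 <= j < n.+1) (j == a) * c = 0.
  rewrite big1_seq // => j /andP [_]; rewrite mem_iota => /andP [hj _].
  rewrite (_ : (j == a) = false) //; lia.
rewrite (@big_cat_nat _ _ _ a); try lia.
rewrite E1 big_ltn; try lia.
by rewrite E2 eqxx /= mul1n addn0.
Qed.

Lemma sum_delta2 n a b c : 1 <= a <= n -> 1 <= b <= n ->
  \sum_(1 <= i < n.+1) \sum_(1 <= j < n.+1) (i == a) * (j == b) * c = c.
Proof.
move=> ha hb.
under eq_big_nat => i _ do under eq_big_nat => j _ do rewrite mulnAC mulnC.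
under eq_big_nat => i _ do rewrite sum_delta //.
exact: sum_delta.
Qed.

Lemma InvF_swap n f k : 1 <= k -> k < n ->
  InvF n (fun i => f (tau k i)) + (f k.+1 < f k) = InvF n f + (f k < f k.+1).
Proof.
move=> hk hkn.
rewrite !InvF_full.
have E : \sum_(1 <= i < n.+1) \sum_(1 <= j < n.+1) (i < j) * (f (tau k j) < f (tau k i))
   = \sum_(1 <= i < n.+1) \sum_(1 <= j < n.+1) (tau k i < tau k j) * (f j < f i).
  transitivity (\sum_(1 <= i < n.+1) \sum_(1 <= j < n.+1)
     (fun a b => (tau k a < tau k b) * (f b < f a)) (tau k i) (tau k j)).
    by apply: eq_big_nat => i _; apply: eq_big_nat => j _; rewrite /= !tauK.
  under eq_big_nat => i _ do rewrite (@sum_swap (fun b => (tau k (tau k i) < tau k b) * (f b < f (tau k i)))) //.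
  exact: (@sum_swap (fun a => \sum_(1 <= j < n.+1) (tau k a < tau k j) * (f j < f a))).
rewrite E.
rewrite -{1}(@sum_delta2 n k k.+1 (f k.+1 < f k)); try lia.
rewrite -{1}(@sum_delta2 n k.+1 k (f k < f k.+1)); try lia.
rewrite -!big_split /=.
apply: eq_big_nat => i _; rewrite -!big_split /=; apply: eq_big_nat => j _.
rewrite /tau.
repeat (case: eqP => ?; try subst); lia.
Qed.

Lemma InvF_ext n f g : (forall i, f i = g i) -> InvF n f = InvF n g.
Proof. by move=> h; rewrite /InvF; apply: eq_bigr => i _; apply: eq_bigr => k _; rewrite !h. Qed.

Lemma inv_multi (n l : nat) (X Y : nat -> nat) (j t : nat) :
  1 < l -> 1 <= j -> j + t * l + 1 <= n ->
  (forall s, s <= t -> [/\ X (j + s * l) = X j, Y (j + s * l) = Y j,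
        X (j + s * l + 1) = Y j & Y (j + s * l + 1) = X j]) ->
  (forall s u, s <= t -> 1 < u < l -> X (j + s * l + u) = Y (j + s * l + u)) ->
  (forall k, k < j -> X k = Y k) -> (forall k, j + t * l + 1 < k -> X k = Y k) ->
  InvF n Y + t.+1 * (Y j < X j) = InvF n X + t.+1 * (X j < Y j).
Proof.
move=> hl hj hn hpair hmid hlo hhi.
pose f s k := if (j <= k) && (k < j + s * l) then Y k else X k.
have step : forall s, s <= t -> forall i, f s.+1 i = f s (tau (j + s * l) i).
  move=> s hs i; have [e1 e2 e3 e4] := hpair s hs.
  have hsl : s * l <= t * l by apply: leq_mul.
  rewrite /f /tau mulSn.
  case: (i =P j + s * l) => [->|h1].
    rewrite (_ : (j <= j + s * l) && (j + s * l < j + (l + s * l)) = true); last lia.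
    rewrite (_ : (j <= (j + s * l).+1) && ((j + s * l).+1 < j + s * l) = false); last lia.
    by rewrite -addn1 e2 e3.
  case: (i =P (j + s * l).+1) => [->|h2].
    rewrite (_ : (j <= (j + s * l).+1) && ((j + s * l).+1 < j + (l + s * l)) = true); last lia.
    rewrite (_ : (j <= (j + s * l)) && ((j + s * l) < j + s * l) = false); last lia.
    by rewrite -addn1 e1 e4.
  case: (ltnP i j) => hij; first by [].
  case: (ltnP i (j + s * l)) => his.
    by have -> : (i < j + (l + s * l)) = true by lia.
  case: (ltnP i (j + (l + s * l))) => hil; last by [].
  rewrite /=; have E : i = j + s * l + (i - j - s * l) by lia.
  rewrite E; symmetry; apply: hmid => //; lia.
have ind : forall s, s <= t.+1 -> InvF n (f s) + s * (Y j < X j) = InvF n X + s * (X j < Y j).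
  elim=> [|s IH] hs.
    rewrite !mul0n !addn0; apply: InvF_ext => i; rewrite /f mul0n addn0.
    by rewrite (_ : (j <= i) && (i < j) = false) //; lia.
  have hsl : s * l <= t * l by apply: leq_mul.
  have := @InvF_swap n (f s) (j + s * l) ltac:(lia) ltac:(lia).
  rewrite (@InvF_ext n (fun i => f s (tau (j + s * l) i)) (f s.+1)); last by move=> i; rewrite step.
  have [e1 e2 e3 e4] := hpair s ltac:(lia).
  rewrite /f.
  rewrite (_ : (j <= (j + s * l).+1) && ((j + s * l).+1 < j + s * l) = false); last lia.
  rewrite (_ : (j <= (j + s * l)) && ((j + s * l) < j + s * l) = false); last lia.
  rewrite -[(j + s * l).+1]addn1 e1 e3 => h.
  have := IH ltac:(lia); rewrite /f => h'.
  rewrite (mulSn s (Y j < X j)) (mulSn s (X j < Y j)); lia.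
have := ind t.+1 (leqnn _).
rewrite (@InvF_ext n (f t.+1) Y) // => i.
rewrite /f; case: ifP => // /negbT; rewrite negb_and -ltnNge -leqNgt => /orP [h|h].
  by rewrite hlo.
rewrite hhi //; rewrite mulSn in h; lia.
Qed.

Lemma xat0 q n (x : word q n) : xat x 0 = 0.
Proof. by []. Qed.

Lemma xat_big q n (x : word q n) k : n < k -> xat x k = 0.
Proof. move=> h; rewrite /xat (_ : (0 < k <= n) = false) //; lia. Qed.

Lemma xat_eq q n (x y : word q n) : (forall k, xat x k = xat y k) -> x = y.
Proof.
move=> h; apply: val_inj.
have : map val (val x) = map val (val y).
  apply: (@eq_from_nth _ 0); first by rewrite !size_map !size_tuple.
  move=> i; rewrite size_map size_tuple => hi.
  have := h i.+1; rewrite /xat /=.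
  by rewrite (_ : i < n = true).
by move/(inj_map val_inj).
Qed.

Lemma W_eq l X Y c i : (forall k, k < l -> X (i - k) = Y (i - k)) ->
  Wc l X c i = Wc l Y c i.
Proof.
move=> h; rewrite /Wc; apply: eq_in_count => k; rewrite mem_iota => /andP [_ hk].
by rewrite h.
Qed.

Lemma perm_W l q n (x y : word q n) i c :
  perm_eq (read_entry l x i) (read_entry l y i) ->
  Wc l (xat x) c i = Wc l (xat y) c i.
Proof.
move/permP => h; have := h (pred1 c); rewrite /read_entry !count_map.
by [].
Qed.

Lemma count3 (P : pred nat) N a b c :
  a != b -> a != c -> b != c -> 1 <= a <= N -> 1 <= b <= N -> 1 <= c <= N ->
  P a -> P b -> P c -> 3 <= count P (iota 1 N).
Proof.
move=> hab hac hbc ha hb hc pa pb pc; rewrite -size_filter.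
apply: (@uniq_leq_size _ [:: a; b; c]).
  by rewrite /= !inE negb_or hab hac hbc.
move=> z; rewrite !inE => /or3P [] /eqP ->; rewrite mem_filter mem_iota ?pa ?pb ?pc /=; lia.
Qed.

Lemma pboolP (P : Prop) : pbool P -> P.
Proof. by rewrite /pbool; case: excluded_middle_informative. Qed.

Lemma Pbound q n t : (INR t < half_loglog q n - 1)%Re -> t.+1 < Pval q n.
Proof.
rewrite /Pval /ceilR; set h := half_loglog q n => ht.
have [a1 a2] := archimed (- h).
have : (IZR (up (-h)) < - INR t)%Re by lra.
rewrite INR_IZR_INZ -opp_IZR => /lt_IZR => hz.
lia.
Qed.

Lemma alt_pattern (a b : nat) m p :
  flatten [seq [:: a; b] | _ <- iota p m] = [seq (if odd k then b else a) | k <- iota p.*2 m.*2].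
Proof.
elim: m p => [|m IH] p //=.
by rewrite IH odd_double -doubleS.
Qed.

Lemma subseq_alt q n l (x : word q n) i t a b : a != b ->
  (forall s, s <= t -> xat x (i + s * l) = a /\ xat x (i + s * l + 1) = b) ->
  alternating (the_subseq l x i t).
Proof.
move=> hab h.
have E : the_subseq l x i t = [seq (if odd k then b else a) | k <- iota 0 (t.+1).*2].
  rewrite /the_subseq -(alt_pattern a b t.+1 0); congr flatten.
  apply/eq_in_map => s; rewrite mem_iota => /andP [_ hs].
  by have [-> ->] := h s ltac:(lia).
exists a, b; split; first by apply/eqP.
by rewrite E size_map size_iota.
Qed.

Lemma part1 q n l a : 2 < l -> a < Pval q n -> is_read_code l 3 (codeC q n l a).
Proof.
move=> hl ha x y hx hy hxy.
rewrite !inE in hx hy.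
case/andP: hx => /pboolP gx ix; case/andP: hy => /pboolP gy iy.
rewrite leqNgt; apply/negP => hd.
move: ix iy.
set X := xat x; set Y := xat y.
have X0 : X 0 = Y 0 by [].
have exP : exists k, X k != Y k.
  have [//|hne] := classic (exists k, X k != Y k).
  have exy : x = y.
    apply: xat_eq => k; case: (X k =P Y k) => // /eqP h.
    by case: hne; exists k.
  by rewrite exy eqxx in hxy.
have ubP : forall k, X k != Y k -> k <= n.
  move=> k; rewrite leqNgt; apply: contra => hk.
  by rewrite /X /Y !xat_big.
case: (ex_minnP exP) => j hj hjmin'.
case: (ex_maxnP exP ubP) => j' hj' hjmax'.
have hmin : forall k, k < j -> X k = Y k.
  move=> k hk; apply/eqP; apply: contraT => hne; have := hjmin' k hne; lia.
have hmax : forall k, j' < k -> X k = Y k.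
  move=> k hk; apply/eqP; apply: contraT => hne; have := hjmax' k hne; lia.
have jpos : 0 < j.
  move: hj; case: (posnP j) => [->|//]; by rewrite X0 eqxx.
have jn' : j' <= n := ubP _ hj'.
have jj' : j <= j' := hjmax' _ hj.
have Wout : forall m, (m == 0) || (n + l <= m) -> forall c, Wc l X c m = Wc l Y c m.
  move=> m hm c; apply: W_eq => k hk.
  case/orP: hm => [/eqP ->|hm]; first by rewrite sub0n.
  rewrite /X /Y !xat_big //; lia.
have misj : ~~ perm_eq (read_entry l x j) (read_entry l y j).
  apply/negP => /(perm_W (X j)) hW.
  have E := W_rec X (X j) (j.-1) (ltnW (ltnW hl)).
  have E' := W_rec Y (X j) (j.-1) (ltnW (ltnW hl)).
  rewrite prednK // in E E'.
  have := @W_eq l X Y (X j) j.-1 (fun k hk => hmin (j.-1 - k) ltac:(lia)).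
  rewrite (hmin (j - l)) in E; last lia.
  rewrite eqxx (_ : (Y j == X j) = false) in E E'; last by apply/negbTE; rewrite eq_sym.
  rewrite /X /Y in hW E E' *.
  lia.
have misj' : ~~ perm_eq (read_entry l x (j' + l - 1)) (read_entry l y (j' + l - 1)).
  apply/negP => /(perm_W (X j')) hW.
  have E := W_rec X (X j') (j' + l - 1) (ltnW (ltnW hl)).
  have E' := W_rec Y (X j') (j' + l - 1) (ltnW (ltnW hl)).
  rewrite (_ : (j' + l - 1).+1 = j' + l) in E E'; last lia.
  rewrite (_ : j' + l - l = j') in E E'; last lia.
  have := @W_eq l X Y (X j') (j' + l) (fun k hk => hmax (j' + l - k) ltac:(lia)).
  rewrite (hmax (j' + l)) in E; last lia.
  rewrite eqxx (_ : (Y j' == X j') = false) in E E'; last by apply/negbTE; rewrite eq_sym.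
  rewrite /X /Y in hW E E' *.
  lia.
have hS : forall m, m != j -> m != j' + l - 1 -> forall c, Wc l X c m = Wc l Y c m.
  move=> m h1 h2 c.
  case: (boolP ((m == 0) || (n + l <= m))) => hm; first exact: Wout.
  case: (boolP (perm_eq (read_entry l x m) (read_entry l y m))) => hp; first exact: perm_W.
  exfalso.
  move: hm; rewrite negb_or -lt0n -ltnNge => /andP [hm1 hm2].
  have := @count3 (fun i => ~~ perm_eq (read_entry l x i) (read_entry l y i)) (n + l - 1)
     j (j' + l - 1) m ltac:(apply/eqP; lia) ltac:(by rewrite eq_sym)
     ltac:(by rewrite eq_sym) ltac:(lia) ltac:(lia) ltac:(lia) misj misj' hp.
  rewrite /read_dist in hd; lia.
have [t [ej' [hpair hmid]]] := struct_form hl X0 hj hmin hj' hmax hS.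
have hhi : forall k, j + t * l + 1 < k -> X k = Y k by move=> k hk; apply: hmax; lia.
have hinv := @inv_multi n l X Y j t (ltnW hl) jpos ltac:(lia) hpair hmid hmin hhi.
have halt : alternating (the_subseq l x j t).
  apply: (@subseq_alt q n l x j t (X j) (Y j) hj) => s hs.
  by have [e1 _ e3 _] := hpair s hs; split.
case: (Rlt_le_dec (INR t) (half_loglog q n - 1)) => ht; last first.
  move=> _ _; exact: (gx t (Rle_ge _ _ ht) j jpos ltac:(lia) halt).
have hP := Pbound ht.
move=> ix iy.
have key : forall u v, v = u + t.+1 -> u = v %[mod Pval q n] -> False.
  move=> u v -> /eqP; rewrite -{1}(addn0 u) eqn_modDl mod0n modn_small //.
have ixy : InvF n X = InvF n Y %[mod Pval q n].
  by rewrite /InvF -/(Inv x) -/(Inv y) (eqP ix) (eqP iy).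
case: (ltngtP (X j) (Y j)) => hc.
- apply: (key (InvF n X) (InvF n Y)) => //.
  move: hinv; rewrite hc (_ : (Y j < X j) = false); last lia.
  lia.
- apply: (key (InvF n Y) (InvF n X)) => //.
  move: hinv; rewrite hc (_ : (X j < Y j) = false); last lia.
  lia.
- by rewrite hc eqxx in hj.
Qed.

Definition AltI q n l T i (x : word q n) : bool :=
  [forall s : 'I_T.+1, forall e : bool, xat x (i + s * l + e) == xat x (i + e)].

Lemma xat_nth q n (x : word q n) (o0 : 'I_q) p : 0 < p <= n -> xat x p = val (nth o0 x p.-1).
Proof.
move=> hp; rewrite /xat hp (nth_map o0) // size_tuple; lia.
Qed.

Lemma count_alt q n l T i : 1 < l -> 0 < q -> 1 <= i -> i + T * l + 1 <= n ->
  #|[set x : word q n | AltI l T i x]| * q ^ (T * 2) <= q ^ n.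
Proof.
move=> hl hq hi hin.
set Ai := [set x : word q n | AltI l T i x].
pose o0 : 'I_q := Ordinal hq.
pose pos (se : 'I_T * bool) : nat := i + (se.1).+1 * l + se.2.
pose F (x : word q n) (g : {ffun 'I_T * bool -> 'I_q}) (p : nat) : 'I_q :=
  if [pick se | pos se == p] is Some se then g se else nth o0 x p.-1.
pose psi (xg : word q n * {ffun 'I_T * bool -> 'I_q}) : word q n :=
  [tuple F xg.1 xg.2 k.+1 | k < n].
have xat_psi : forall xg p, 0 < p <= n -> xat (psi xg) p = val (F xg.1 xg.2 p).
  move=> xg p hp; rewrite (xat_nth _ o0 hp).
  have hp' : p.-1 < n by lia.
  rewrite -(tnth_nth o0 (psi xg) (Ordinal hp')) tnth_mktuple /=.
  by rewrite prednK //; lia.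
have pos_inj : injective pos.
  move=> [s1 e1] [s2 e2]; rewrite /pos /= => h.
  have hs : s1 = s2 :> nat.
    case: (ltngtP s1 s2) => // hc; exfalso.
    - have := @leq_mul s1.+2 l s2.+1 l hc (leqnn l); rewrite mulSn; case: e1 e2 h => [] [] /=; lia.
    - have := @leq_mul s2.+2 l s1.+1 l hc (leqnn l); rewrite mulSn; case: e1 e2 h => [] [] /=; lia.
  have he : e1 = e2.
    rewrite hs in h; case: e1 e2 h => [] [] //=; lia.
  by rewrite he (val_inj hs).
have pos_range : forall se, 0 < pos se <= n.
  move=> [s e]; rewrite /pos /=.
  have := @leq_mul s.+1 l T l (ltn_ord s) (leqnn l).
  case: e => /=; lia.
have pos_big : forall se, i + 1 < pos se.
  move=> [s e]; rewrite /pos /= mulSn; lia.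
have inj : {in setX Ai [set: {ffun 'I_T * bool -> 'I_q}] &, injective psi}.
  move=> [x g] [x' g']; rewrite !inE /= !andbT => hx hx' E.
  have EF : forall p, 0 < p <= n -> val (F x g p) = val (F x' g' p).
    move=> p hp; by rewrite -(xat_psi (x, g)) // -(xat_psi (x', g')) // E.
  have hg : g = g'.
    apply/ffunP => se; apply: val_inj.
    have := EF (pos se) (pos_range se); rewrite /F.
    case: pickP => [se' /eqP h|]; last by move/(_ se); rewrite eqxx.
    by rewrite (pos_inj _ _ h).
  have none : forall p, 0 < p <= n -> [pick se | pos se == p] = None -> xat x p = xat x' p.
    move=> p hp hn; have := EF p hp; rewrite /F hn => h.
    by rewrite (xat_nth _ o0 hp) (xat_nth _ o0 hp).
  have hxx : x = x'.
    apply: xat_eq => p.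
    case: (boolP (0 < p <= n)) => hp; last by rewrite /xat (negbTE hp).
    case hpk: [pick se | pos se == p] => [[s e]|]; last by apply: none.
    move: hpk; case: (pickP (fun se => pos se == p)) => // se /eqP hse [hse'].
    rewrite hse' in hse.
    move: hx hx'; rewrite ?inE /AltI => /forallP /(_ (inord s.+1)) /forallP /(_ e) /eqP h1.
    move=> /forallP /(_ (inord s.+1)) /forallP /(_ e) /eqP h2.
    rewrite inordK in h1 h2; last by apply: ltn_ord.
    rewrite -hse /pos /= h1 h2.
    have hie : 0 < i + e <= n by clear -hi hin; case: e; lia.
    apply: none => //.
    case: (pickP (fun se => pos se == i + e)) => // se' /eqP h.
    have := pos_big se'; rewrite h; case: (e) => /=; lia.
  by rewrite hxx hg.
have := card_in_imset inj.
rewrite cardsX cardsT card_ffun card_prod !card_ord card_bool => <-.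
have := max_card [set psi xg | xg in setX Ai [set: {ffun 'I_T * bool -> 'I_q}]].
by rewrite card_tuple card_ord.
Qed.

Lemma subseq_cons l q n (x : word q n) i t :
  the_subseq l x i t.+1 = xat x i :: xat x (i + 1) :: the_subseq l x (i + l) t.
Proof.
rewrite /the_subseq.
have -> : iota 0 t.+2 = 0 :: map (addn 1) (iota 0 t.+1) by rewrite /= -iotaDl.
rewrite map_cons -map_comp.
set G := (fun s : nat => _) \o _.
have -> : [seq G s | s <- iota 0 t.+1] =
   [seq [:: xat x (i + l + s * l); xat x (i + l + s * l + 1)] | s <- iota 0 t.+1].
  by apply: eq_map => s; rewrite /G /= add1n mulSn addnA.
by rewrite mul0n addn0.
Qed.

Lemma subseq_size l q n (x : word q n) i t : size (the_subseq l x i t) = (t.+1).*2.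
Proof.
elim: t i => [|t IH] i; first by [].
rewrite subseq_cons (_ : forall (a b : nat) s, size (a :: b :: s) = (size s).+2) // IH.
by rewrite doubleS.
Qed.

Lemma subseq_nth l q n (x : word q n) i t s e : s <= t -> e <= 1 ->
  nth 0 (the_subseq l x i t) (s.*2 + e) = xat x (i + s * l + e).
Proof.
elim: s i t => [|s IH] i t hs he.
  rewrite mul0n addn0 /the_subseq; case: t hs => [|t] _ /=;
  by case: e he => [|[|]] //= _; rewrite mul0n addn0.
case: t hs => [|t] hs; first by [].
rewrite subseq_cons doubleS /= IH //.
by rewrite mulSn addnA.
Qed.

Lemma alt_fact l q n (x : word q n) i t : alternating (the_subseq l x i t) ->
  forall s e, s <= t -> e <= 1 -> xat x (i + s * l + e) = xat x (i + e).
Proof.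
move=> [a [b [hab E]]] s e hs he.
rewrite -(subseq_nth l x i hs he).
have h0 : 0 <= t by [].
rewrite -[i + e](_ : i + 0 * l + e = i + e); last by rewrite mul0n addn0.
rewrite -(subseq_nth l x i h0 he) E subseq_size.
rewrite (nth_map 0) ?size_iota; last lia.
rewrite (nth_map 0) ?size_iota; last lia.
rewrite !nth_iota; try lia.
by rewrite !add0n oddD odd_double.
Qed.

Lemma bad_alt q n l (x : word q n) T :
  (forall t : nat, (INR t >= half_loglog q n - 1)%Re -> T <= t) ->
  ~ good l x -> exists i, [/\ 1 <= i, i + T * l + 1 <= n & AltI l T i x].
Proof.
move=> hT hng; apply: NNPP => hne; apply: hng => t ht i hi hin halt.
apply: hne; exists i; split => //.
  have := hT t ht => hTt.
  have := @leq_mul T l t l hTt (leqnn l); lia.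
apply/forallP => s; apply/forallP => e; apply/eqP.
apply: (alt_fact halt); last by case: e.
have := hT t ht; have := ltn_ord s; lia.
Qed.

Lemma union_bound (T : finType) (A : {set T}) (B : nat -> {set T}) m :
  (forall x, x \in A -> exists2 i, i < m & x \in B i) ->
  #|A| <= \sum_(i < m) #|B i|.
Proof.
elim: m A => [|m IH] A h.
  rewrite big_ord0 leqn0 cards_eq0; apply/eqP/setP => x; rewrite inE.
  by apply/negP => /h [].
rewrite big_ord_recr /=.
have sub : A \subset (A :\: B m) :|: B m.
  by apply/subsetP => x hx; rewrite !inE hx; case: (x \in B m).
apply: leq_trans (subset_leq_card sub) _.
apply: leq_trans (leq_card_setU _ _) _.
rewrite leq_add2r; apply: IH => x; rewrite inE => /andP [hx1 hx2].
have [i hi hxi] := h x hx2.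
exists i => //; rewrite ltn_neqAle -ltnS hi andbT.
by apply: contraNneq hx1 => <-.
Qed.

Lemma bad_bound q n l T : 1 < l -> 0 < q ->
  (forall t : nat, (INR t >= half_loglog q n - 1)%Re -> T <= t) ->
  #|~: [set x : word q n | pbool (good l x)]| * q ^ (T * 2) <= n.+1 * q ^ n.
Proof.
move=> hl hq hT.
pose B i := [set x : word q n | AltI l T i x & (1 <= i) && (i + T * l + 1 <= n)].
have := @union_bound _ (~: [set x : word q n | pbool (good l x)]) B n.+1.
have hcov : forall x, x \in ~: [set x : word q n | pbool (good l x)] ->
    exists2 i, i < n.+1 & x \in B i.
  move=> x; rewrite !inE => hg.
  have hng : ~ good l x by move=> gx; move: hg; rewrite /pbool; case: excluded_middle_informative.
  have [i [h1 h2 h3]] := bad_alt hT hng.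
  exists i; first lia.
  by rewrite inE h3 h1 h2.
move=> /(_ hcov) hU.
apply: leq_trans (leq_mul hU (leqnn _)) _.
rewrite big_distrl /=.
apply: leq_trans (@leq_sum _ _ _ _ (fun _ => q ^ n) _) _.
  move=> i _.
  case: (boolP ((1 <= i) && (i + T * l + 1 <= n))) => hc.
    case/andP: hc => hc1 hc2.
    apply: leq_trans (count_alt hl hq hc1 hc2).
    rewrite leq_mul2r; apply/orP; right; apply: subset_leq_card.
    by apply/subsetP => x; rewrite !inE => /andP [].
  have -> : B i = set0.
    by apply/setP => x; rewrite !inE (negbTE hc) andbF.
  by rewrite cards0.
by rewrite sum_nat_const card_ord.
Qed.

Lemma pigeon (F : nat -> nat) P : 0 < P ->
  exists2 a, a < P & \sum_(i < P) F i <= P * F a.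
Proof.
case: P => // P _; elim: P => [|P [a ha IH]].
  by exists 0 => //; rewrite big_ord1 mul1n.
rewrite big_ord_recr /=.
case: (leqP (F P.+1) (F a)) => hc.
  exists a; first lia.
  rewrite mulSn addnC; exact: leq_add hc IH.
exists P.+1 => //.
have := @leq_mul P.+1 (F a) P.+1 (F P.+1) (leqnn _) (ltnW hc).
move=> hmul; apply: leq_trans (leq_add (leq_trans IH hmul) (leqnn (F P.+1))) _.
by rewrite (mulSn P.+1) addnC.
Qed.

Lemma good_pigeon q n l P : 0 < P -> P = Pval q n ->
  exists2 a, a < P & #|[set x : word q n | pbool (good l x)]| <= P * #|codeC q n l a|.
Proof.
move=> hP eP.
have [a ha hs] := pigeon (fun a => #|codeC q n l a|) hP.
exists a => //; apply: leq_trans hs.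
apply: (@union_bound _ _ (fun a => codeC q n l a)) => x; rewrite inE => gx.
exists (Inv x %% P); first by rewrite ltn_mod.
by rewrite inE gx -eP modn_mod eqxx.
Qed.
Local Open Scope R_scope.

Lemma INR_addn (a b : nat) : INR (a + b)%N = INR a + INR b.
Proof. rewrite -plusE; exact: plus_INR. Qed.
Lemma INR_muln (a b : nat) : INR (a * b)%N = INR a * INR b.
Proof. rewrite -multE; exact: mult_INR. Qed.
Lemma INR_expn (a b : nat) : INR (a ^ b)%N = INR a ^ b.
Proof. elim: b => [|b IH] //=; by rewrite expnS INR_muln IH. Qed.
Lemma INR_leq (a b : nat) : (a <= b)%N -> INR a <= INR b.
Proof. by move/leP; apply: le_INR. Qed.

Lemma ln_le x y : 0 < x -> x <= y -> ln x <= ln y.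
Proof.
move=> hx hxy; case: (Rle_lt_or_eq_dec _ _ hxy) => h.
  by apply: Rlt_le; apply: ln_increasing.
by rewrite h; apply: Rle_refl.
Qed.

Lemma ln_sub1 y : 0 < y -> ln y <= y - 1.
Proof.
move=> hy; have h := exp_ineq1_le (y - 1).
have : ln y <= ln (exp (y - 1)) by apply: ln_le => //; lra.
by rewrite ln_exp.
Qed.

Lemma ceil_ge y : (forall t : nat, INR t >= y -> (Z.to_nat (ceilR y) <= t)%N) /\
  y <= INR (Z.to_nat (ceilR y)) /\ INR (Z.to_nat (ceilR y)) <= Rmax 0 (y + 1).
Proof.
rewrite /ceilR; have [a1 a2] := archimed (- y).
split.
  move=> t ht.
  have : - INR t < IZR (up (-y)) by lra.
  rewrite INR_IZR_INZ -opp_IZR => /lt_IZR hz.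
  apply/leP; lia.
case: (Z_lt_le_dec (1 - up (-y)) 0) => hz.
  have -> : Z.to_nat (1 - up (-y)) = 0%N by lia.
  have : IZR (1 - up (-y)) < 0 by apply: IZR_lt.
  rewrite minus_IZR /= => h; split; first lra.
  apply: Rmax_l.
rewrite INR_IZR_INZ Z2Nat.id // minus_IZR; split; first lra.
apply: Rle_trans (Rmax_r _ _); lra.
Qed.

Lemma exp_le x y : x <= y -> exp x <= exp y.
Proof.
move=> h; case: (Rle_lt_or_eq_dec _ _ h) => h'.
  by apply: Rlt_le; apply: exp_increasing.
by rewrite h'; apply: Rle_refl.
Qed.

Lemma div_le a b d : 0 < d -> a <= b -> a / d <= b / d.
Proof. move=> hd h; apply: Rmult_le_compat_r => //; apply: Rlt_le; apply: Rinv_0_lt_compat => //. Qed.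

Lemma pow_exp x m : 0 < x -> x ^ m = exp (INR m * ln x).
Proof. by move=> hx; rewrite -ln_pow // exp_ln //; apply: pow_lt. Qed.

Lemma real_core (q n P T G B C : nat) (eps : R) :
  (2 <= q)%N -> 0 < eps -> 0 < INR n ->
  let Lq := ln (INR q) in
  let c := eps * Lq / 4 in
  let L := logq q (INR n) in
  1 <= L -> 4 * INR q ^ 2 <= L -> 2 * INR q ^ 2 <= c * L -> 2 <= c * L ->
  ln L <= c * Lq * L ->
  half_loglog q n - 1 <= INR T ->
  INR P <= half_loglog q n + 1 -> (0 < P)%N ->
  (B * q ^ (T * 2) <= n.+1 * q ^ n)%N ->
  (G + B = q ^ n)%N -> (G <= P * C)%N ->
  INR n - logq q (INR C) <= logq q (INR P) + eps /\
  INR n - logq q (INR C) <= logq q (logq q (INR n)) - logq q 2 + eps.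
Proof.
move=> hq heps hn Lq c L hL1 hd1 hd2 hr1 hr2 hT hP hP0 hB hGB hGC.
have hQ : 2 <= INR q by have := INR_leq hq.
have hLq : 0 < Lq.
  rewrite /Lq -ln_1; apply: ln_increasing; lra.
have hc : 0 < c by rewrite /c; apply: Rmult_lt_0_compat => //; nra.
have hL0 : 0 < L by lra.
have eL : ln (INR n) = L * Lq by rewrite /L /logq -/Lq; field; lra.
have hthr : half_loglog q n = (L + ln L / Lq) / 2 by [].
have hlnL : 0 <= ln L by rewrite -ln_1; apply: ln_le; lra.
have hlnLq : 0 <= ln L / Lq by apply: Rmult_le_pos => //; apply: Rlt_le; apply: Rinv_0_lt_compat.
have hQ2T : INR n * L <= INR q ^ 2 * INR q ^ (T * 2).
  rewrite -pow_add pow_exp; last lra.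
  rewrite -(exp_ln (INR n * L)); last by apply: Rmult_lt_0_compat.
  apply: exp_le; rewrite ln_mult // eL -/Lq.
  have : L + ln L / Lq <= INR (2 + T * 2).
    rewrite plus_INR mult_INR /=; lra.
  move=> h; have := Rmult_le_compat_r Lq _ _ (Rlt_le _ _ hLq) h.
  have -> : (L + ln L / Lq) * Lq = L * Lq + ln L by field; lra.
  done.
have hBr : INR B * INR q ^ (T * 2) <= (INR n + 1) * INR q ^ n.
  by have := INR_leq hB; rewrite !INR_muln !INR_expn S_INR.
have hGBr : INR G + INR B = INR q ^ n by rewrite -INR_expn -hGB INR_addn.
have hGCr : INR G <= INR P * INR C by have := INR_leq hGC; rewrite INR_muln.
set Qn := INR q ^ n in hBr hGBr.
have hQn : 0 < Qn by apply: pow_lt; lra.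
have hq2 : 0 < INR q ^ 2 by apply: pow_lt; lra.
have hq2T : 0 < INR q ^ (T * 2) by apply: pow_lt; lra.
have hBL : INR B * L <= 2 * INR q ^ 2 * Qn.
  have h1 : INR B * (INR n * L) <= INR B * (INR q ^ 2 * INR q ^ (T * 2)).
    apply: Rmult_le_compat_l => //; apply: pos_INR.
  have h2 : INR q ^ 2 * (INR B * INR q ^ (T * 2)) <= INR q ^ 2 * ((INR n + 1) * Qn).
    by apply: Rmult_le_compat_l => //; lra.
  have hn1 : 1 <= INR n.
    have : (0 < n)%N by apply/ltP; apply: INR_lt; rewrite /=; lra.
    by move/INR_leq.
  have h4 : 0 <= (INR n - 1) * (INR q ^ 2 * Qn).
    by apply: Rmult_le_pos; [lra | apply: Rlt_le; apply: Rmult_lt_0_compat].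
  have h3 : INR n * (INR B * L) <= INR n * (2 * INR q ^ 2 * Qn) by nra.
  by apply: (Rmult_le_reg_l (INR n)).
set d := 2 * INR q ^ 2 / L.
have hdL : d * L = 2 * INR q ^ 2 by rewrite /d; field; lra.
have hd0 : 0 < d by rewrite /d; apply: Rdiv_lt_0_compat => //; lra.
have hdh : d <= 1/2 by nra.
have hdc : d <= c by nra.
have hBd : INR B <= d * Qn by nra.
have hG : (1 - d) * Qn <= INR P * INR C by lra.
have hP0r : 0 < INR P by apply: lt_0_INR; apply/ltP.
have hCpos : 0 < INR C.
  have : 0 < INR P * INR C by nra.
  move=> h; have := pos_INR C; nra.
have hlnC : ln (1 - d) + INR n * Lq <= ln (INR P) + ln (INR C).
  rewrite -ln_mult // -(ln_pow (INR q)); last lra.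
  rewrite -ln_mult; try lra; last by [].
  by apply: ln_le => //; apply: Rmult_lt_0_compat => //; lra.
have hln1d : - ln (1 - d) <= 2 * d.
  have h := ln_sub1 (Rinv_0_lt_compat _ (ltac:(lra) : 0 < 1 - d)).
  rewrite ln_Rinv in h; last lra.
  have : / (1 - d) - 1 <= 2 * d.
    have -> : / (1 - d) - 1 = d / (1 - d) by field; lra.
    apply: (Rmult_le_reg_r (1 - d)); first lra.
    have -> : d / (1 - d) * (1 - d) = d by field; lra.
    nra.
  lra.
have hred : INR n - logq q (INR C) <= logq q (INR P) + eps / 2.
  rewrite /logq -/Lq.
  have -> : INR n - ln (INR C) / Lq = (INR n * Lq - ln (INR C)) / Lq by field; lra.
  have -> : ln (INR P) / Lq + eps / 2 = (ln (INR P) + 2 * c) / Lq by rewrite /c; field; lra.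
  apply: div_le => //; lra.
split; first lra.
have hPL : ln 2 + ln (INR P) - ln L <= 2 * c.
  have e : ln 2 + ln (INR P) - ln L = ln (2 * INR P / L).
    have h2P : 0 < 2 * INR P by lra.
    have hiL : 0 < / L by apply: Rinv_0_lt_compat.
    have h2 : 0 < 2 by lra.
    rewrite /Rdiv (ln_mult _ _ h2P hiL) (ln_mult _ _ h2 hP0r) ln_Rinv //; lra.
  rewrite e; apply: Rle_trans (ln_sub1 _) _.
    apply: Rdiv_lt_0_compat => //; lra.
  have h2P : 2 * INR P <= L + ln L / Lq + 2 by rewrite hthr in hP; lra.
  have -> : 2 * INR P / L - 1 = (2 * INR P - L) / L by field; lra.
  apply: (Rmult_le_reg_r L) => //.
  have -> : (2 * INR P - L) / L * L = 2 * INR P - L by field; lra.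
  have : ln L / Lq <= c * L.
    apply: (Rmult_le_reg_r Lq) => //.
    have -> : ln L / Lq * Lq = ln L by field; lra.
    lra.
  lra.
have : logq q (INR P) <= logq q (logq q (INR n)) - logq q 2 + eps / 2.
  rewrite /logq -/Lq -/L.
  have -> : ln L / Lq - ln 2 / Lq + eps / 2 = (ln L - ln 2 + 2 * c) / Lq by rewrite /c; field; lra.
  apply: div_le => //; lra.
lra.
Qed.
Close Scope R_scope.

Lemma part2 q l : (2 <= q)%N -> (3 <= l)%N ->
  (forall eps : R, (0 < eps)%Re ->
     exists N : nat, forall n : nat, (N <= n)%N ->
       exists a : nat, (a < Pval q n)%N /\
         (redundancy (codeC q n l a) <= logq q (INR (Pval q n)) + eps)%Re /\
         (redundancy (codeC q n l a)
            <= logq q (logq q (INR n)) - logq q 2 + eps)%Re).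
Proof.
move=> hq hl eps heps.
Local Open Scope R_scope.
have hQ : 2 <= INR q by have := INR_leq hq.
set Lq := ln (INR q).
have hLq : 0 < Lq by rewrite /Lq -ln_1; apply: ln_increasing; lra.
set c := eps * Lq / 4.
have hc : 0 < c by rewrite /c; nra.
set M := 2 / (c * Lq).
have hM : 0 < M by rewrite /M; apply: Rdiv_lt_0_compat; nra.
set Q2 := INR q ^ 2.
have hQ2 : 0 < Q2 by rewrite /Q2; nra.
set K := 1 + 4 * Q2 + 2 * Q2 / c + 2 / c + 2 * Rabs (ln M) / (c * Lq).
have hK1 : 0 <= 2 * Q2 / c by apply: Rlt_le; apply: Rdiv_lt_0_compat; lra.
have hK2 : 0 <= 2 / c by apply: Rlt_le; apply: Rdiv_lt_0_compat; lra.
have hK3 : 0 <= 2 * Rabs (ln M) / (c * Lq).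
  apply: Rmult_le_pos; first by have := Rabs_pos (ln M); lra.
  by apply: Rlt_le; apply: Rinv_0_lt_compat; nra.
have [hKa [hKb [hKc [hKd hKe]]]] : 1 <= K /\ 4 * Q2 <= K /\ 2 * Q2 / c <= K /\ 2 / c <= K /\
    2 * Rabs (ln M) / (c * Lq) <= K by rewrite /K; repeat split; lra.
have hexp := exp_pos (K * Lq).
have [u1 u2] := archimed (exp (K * Lq)).
exists (Z.to_nat (up (exp (K * Lq)))) => n hn.
have hup : (0 < up (exp (K * Lq)))%Z by apply: lt_IZR; lra.
have hnr : exp (K * Lq) < INR n.
  have := INR_leq hn; rewrite INR_IZR_INZ Z2Nat.id; last lia.
  lra.
have hn0 : 0 < INR n by lra.
have hlnn : K * Lq < ln (INR n) by rewrite -(ln_exp (K * Lq)); apply: ln_increasing.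
set L := logq q (INR n).
have eL : L = ln (INR n) / Lq by [].
have hLK : K < L.
  rewrite eL; apply: (Rmult_lt_reg_r Lq) => //.
  have -> : ln (INR n) / Lq * Lq = ln (INR n) by field; lra.
  done.
have hL1 : 1 <= L by lra.
have hd1 : 4 * INR q ^ 2 <= L by rewrite -/Q2; lra.
have hcL : forall z, z / c <= K -> z <= c * L.
  move=> z hz; have : z / c <= L by lra.
  move=> h; have := Rmult_le_compat_l c _ _ (Rlt_le _ _ hc) h.
  have -> : c * (z / c) = z by field; lra.
  done.
have hd2 : 2 * INR q ^ 2 <= c * L by apply: hcL; rewrite -/Q2; lra.
have hr1 : 2 <= c * L by apply: hcL; lra.
have hr2 : ln L <= c * Lq * L.
  have hL0 : 0 < L by lra.
  have e1 : ln L = ln M + ln (L / M).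
    rewrite /Rdiv ln_mult //; last by apply: Rinv_0_lt_compat.
    rewrite ln_Rinv //; lra.
  have h1 := ln_sub1 (Rdiv_lt_0_compat _ _ hL0 hM).
  have e2 : L / M = c * Lq * L / 2 by rewrite /M; field; split; lra.
  have hab : ln M <= Rabs (ln M) := Rle_abs _.
  have h3 : 2 * Rabs (ln M) / (c * Lq) <= L by lra.
  have h4 : 2 * Rabs (ln M) <= c * Lq * L.
    have hcl : 0 < c * Lq by nra.
    have := Rmult_le_compat_l (c * Lq) _ _ (Rlt_le _ _ hcl) h3.
    have -> : c * Lq * (2 * Rabs (ln M) / (c * Lq)) = 2 * Rabs (ln M) by field; lra.
    lra.
  have h1' : ln (L / M) <= c * Lq * L / 2 - 1 by rewrite -e2.
  rewrite e1; lra.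
have hthr : half_loglog q n = (L + ln L / Lq) / 2 by [].
have hlnL : 0 <= ln L by rewrite -ln_1; apply: ln_le; lra.
have hlnLq : 0 <= ln L / Lq.
  by apply: Rmult_le_pos => //; apply: Rlt_le; apply: Rinv_0_lt_compat.
have hthr0 : 0 < half_loglog q n by rewrite hthr; lra.
have [hT1 [hT2 _]] := ceil_ge (half_loglog q n - 1).
have [_ [hP1 hP2]] := ceil_ge (half_loglog q n).
set T := Z.to_nat (ceilR (half_loglog q n - 1)) in hT1 hT2.
have ePv : Pval q n = Z.to_nat (ceilR (half_loglog q n)) by [].
rewrite -ePv in hP1 hP2.
rewrite Rmax_right in hP2; last lra.
have hP0 : (0 < Pval q n)%N.
  apply/ltP; apply: INR_lt; rewrite /=; lra.
have hB := @bad_bound q n l T ltac:(lia) ltac:(lia) hT1.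
have hGB := cardsC [set x : word q n | pbool (good l x)].
rewrite card_tuple card_ord in hGB.
have [a ha hGC] := @good_pigeon q n l (Pval q n) hP0 erefl.
exists a; split => //.
rewrite /redundancy.
have := @real_core q n (Pval q n) T _ _ _ eps hq heps hn0 hL1 hd1 hd2 hr1 hr2
   ltac:(lra) ltac:(lra) hP0 hB hGB hGC.
done.
Qed.
Close Scope R_scope.

Theorem theorem4 (q l : nat) (hq : (2 <= q)%N) (hl : (3 <= l)%N) :
  (forall n a : nat, (0 < n)%N -> (a < Pval q n)%N ->
     is_read_code l 3 (codeC q n l a))
  /\
  (forall eps : R, (0 < eps)%Re ->
     exists N : nat, forall n : nat, (N <= n)%N ->
       exists a : nat, (a < Pval q n)%N /\
         (redundancy (codeC q n l a) <= logq q (INR (Pval q n)) + eps)%Re /\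
         (redundancy (codeC q n l a)
            <= logq q (logq q (INR n)) - logq q 2 + eps)%Re).
Proof.
split.
  move=> n a _ ha; exact: part1 hl ha.
exact: part2 hq hl.
Qed.
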